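(* Let $\mathbf{A}\in\mathbb{R}^{n\times n}$ be symmetric positive semidefinite with $\mathbf{1}^{\intercal}\mathbf{A}=\mathbf{0}^{\intercal}$, and let $\mathbf{x}\in\{-1,1\}^n$. Set $M=\frac14\mathbf{x}^{\intercal}\mathbf{A}\mathbf{x}$ and $S=\{i\in\{1,\dots,n\}:\mathbf{x}_i=1\}$, and assume $S\neq\emptyset$. Then there exists $i\in S$ such that, letting $\mathbf{x}'$ be $\mathbf{x}$ with its $i$-th entry changed to $-1$, we have $M-\frac14\mathbf{x}'^{\intercal}\mathbf{A}\mathbf{x}'\le\frac{2M}{|S|}$.
   Context: $\mathbf{1}$ is the all-ones vector and $\mathbf{0}$ the all-zeros vector. *)

(* Defs.v *)
From mathcomp Require Import all_boot all_order all_algebra.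
Set Implicit Arguments. Unset Strict Implicit. Unset Printing Implicit Defensive.
Import Order.TTheory GRing.Theory Num.Theory.
Local Open Scope ring_scope.

Definition qform (R : ringType) (n : nat) (A : 'M[R]_n) (v : 'cV[R]_n) : R :=
  ((v^T *m A *m v) 0 0).

Definition psd (R : numDomainType) (n : nat) (A : 'M[R]_n) : Prop :=
  forall v : 'cV[R]_n, 0 <= qform A v.

Definition flip_to_neg (R : ringType) (n : nat) (x : 'cV[R]_n) (i : 'I_n) : 'cV[R]_n :=
  \col_j (if j == i then -1 else x j 0).

(* Main.v *)
Require Import Defs.
From mathcomp Require Import all_boot all_order all_algebra.
From mathcomp Require Import ring lra.
Import Order.TTheory GRing.Theory Num.Theory.
Local Open Scope ring_scope.

Section Aux.
Variables (R : realFieldType) (n : nat).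

Lemma qformE (A : 'M[R]_n) v :
  qform A v = \sum_j \sum_k v j 0 * A j k * v k 0.
Proof.
rewrite /qform mxE exchange_big /=; apply: eq_bigr => k _.
rewrite mxE big_distrl /=; apply: eq_bigr => j _; by rewrite !mxE.
Qed.

Lemma sum_delta (i : 'I_n) (F : 'I_n -> R) :
  \sum_j (j == i)%:R * F j = F i.
Proof.
rewrite (bigD1 i) //= eqxx mul1r big1 ?addr0 // => j /negbTE ->; by rewrite mul0r.
Qed.

Lemma sum_delta' (i : 'I_n) (F : 'I_n -> R) :
  \sum_j F j * (j == i)%:R = F i.
Proof.
rewrite (bigD1 i) //= eqxx mulr1 big1 ?addr0 // => j /negbTE ->; by rewrite mulr0.
Qed.

End Aux.

Theorem lemma3p6 (R : realFieldType) (n : nat) (A : 'M[R]_n) (x : 'cV[R]_n) :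
  A^T = A ->
  psd A ->
  (const_mx 1 : 'rV[R]_n) *m A = 0 ->
  (forall j : 'I_n, x j 0 = 1 \/ x j 0 = -1) ->
  let M := qform A x / 4 in
  let S := [set j : 'I_n | x j 0 == 1] in
  S != set0 ->
  exists2 i : 'I_n, i \in S &
    M - qform A (flip_to_neg x i) / 4 <= 2 * M / #|S|%:R.
Proof.
move=> Asym Apsd A1 xpm M S SN0.
have Asy j k : A j k = A k j.
  by rewrite -{1}Asym mxE.
have colsum k : \sum_j A j k = 0.
  have := congr1 (fun B : 'rV[R]_n => B 0 k) A1; rewrite !mxE => H; rewrite -[X in _ = X]H.
  by apply: eq_bigr => j _; rewrite mxE mul1r.
have diag i : 0 <= A i i.
  have := Apsd (\col_j (j == i)%:R); rewrite qformE.
  under eq_bigr => j _ do (under eq_bigr => k _ do rewrite !mxE); rewrite /=.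
  under eq_bigr => j _ do rewrite sum_delta'.
  by rewrite sum_delta.
pose r i := \sum_k A i k * x k 0.
have step1 i : i \in S -> M - qform A (flip_to_neg x i) / 4 = r i - A i i.
  rewrite inE => /eqP xi.
  have -> : qform A (flip_to_neg x i) = qform A x - 4 * r i + 4 * A i i.
    have fx j : flip_to_neg x i j 0 = x j 0 - 2 * (j == i)%:R.
      rewrite mxE; case: eqP => [->|_] /=; rewrite ?xi ?mulr1 ?mulr0 ?subr0 //; ring.
    rewrite !qformE.
    under eq_bigr => j _ do (under eq_bigr => k _ do rewrite !fx).
    have term j k : (x j 0 - 2 * (j == i)%:R) * A j k * (x k 0 - 2 * (k == i)%:R)
      = x j 0 * A j k * x k 0 - 2 * (x j 0 * A j k * (k == i)%:R)
        - 2 * ((j == i)%:R * (A j k * x k 0)) + 4 * ((j == i)%:R * (A j k * (k == i)%:R)).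
      ring.
    rewrite (eq_bigr (fun j => \sum_k x j 0 * A j k * x k 0 - 2 * (x j 0 * A j i)
       - 2 * ((j == i)%:R * r j) + 4 * ((j == i)%:R * A j i))); last first.
      move=> j _; under eq_bigr => k _ do rewrite term.
      by rewrite big_split !sumrB -!big_distrr /= !sum_delta'.
    rewrite big_split !sumrB -!mulr_sumr !sum_delta.
    have -> : \sum_j x j 0 * A j i = r i.
      by apply: eq_bigr => j _; rewrite Asy mulrC.
    rewrite /=; ring.
  rewrite /M; by field.
have m1 : ((-1 : R) == 1) = false by apply: lt_eqF; lra.
have e1 : \sum_i x i 0 * r i = qform A x.
  rewrite qformE; apply: eq_bigr => j _; rewrite /r mulr_sumr.
  by apply: eq_bigr => k _; rewrite mulrA.
have e2 : \sum_i r i = 0.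
  rewrite /r exchange_big; apply: big1 => k _; by rewrite -mulr_suml colsum mul0r.
have sumS : \sum_(i in S) r i = 2 * M.
  have -> : \sum_(i in S) r i = \sum_i (x i 0 * r i + r i) / 2.
    rewrite big_mkcond /=; apply: eq_bigr => t _.
    rewrite inE; case: (xpm t) => ->; rewrite ?eqxx ?m1 /=; by field.
  rewrite -mulr_suml big_split /= e1 e2 /M; by field.
have cS : (0 < #|S|)%N by rewrite card_gt0.
case: (boolP [exists i in S, M - qform A (flip_to_neg x i) / 4 <= 2 * M / #|S|%:R]).
  by case/exists_inP => t tS h; exists t.
move/exists_inPn => H; exfalso.
have : \sum_(i in S) (2 * M / #|S|%:R) < \sum_(i in S) (r i - A i i).
  apply: ltr_sum.
    by case/set0Pn: SN0 => t tS; apply/hasP; exists t; rewrite ?mem_index_enum.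
  by move=> t tS; rewrite -step1 // ltNge; apply: H.
rewrite sumr_const sumrB sumS.
have hc : 2 * M / #|S|%:R *+ #|S| = 2 * M.
  by rewrite -mulr_natr divfK // pnatr_eq0 -lt0n.
rewrite hc => h.
have h2 : 0 <= \sum_(i in S) A i i by apply: sumr_ge0 => t _; exact: diag.
move: h; rewrite ltNge => /negP; apply; rewrite lerBlDr lerDl; exact: h2.
Qed.
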